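(* Let $(A,C,k)$ be an instance and let $W$ be an affordable committee satisfying EJR+. Then every AV-completion of $W$ has utilitarian ratio at least $\frac{1}{4\sqrt{k}}-\frac{1}{2k}$.
   Context: An instance $(A,C,k)$ consists of a finite nonempty candidate set $C$, voters $N=\{1,\dots,n\}$, approval sets $A_i\subseteq C$, and a committee size $1\le k\le |C|$. $N_c=\{i: c\in A_i\}$. A committee is $W\subseteq C$ with $|W|\le k$. $\mathrm{sw}(W)=\sum_i|A_i\cap W|$; the utilitarian ratio is $\mathrm{sw}(W)/\max\{\mathrm{sw}(W'):|W'|=k\}$. An AV-completion of $W$ is $W\cup T$ with $T\subseteq C\setminus W$, $|T|=k-|W|$, maximizing $\sum_{c\in T}|N_c|$. $W$ is affordable if there are $p_i:C\to\mathbb{R}_{\ge0}$ with $p_i(c)=0$ for $c\notin A_i$, $\sum_c p_i(c)\le k/n$, $\sum_i p_i(c)=1$ for $c\in W$, $\sum_i p_i(c)=0$ for $c\notin W$. $W$ satisfies EJR+ if for every $\ell\in\{1,\dots,k\}$ and every group $N'\subseteq N$ with $|N'|\ge \ell n/k$ and $\bigcap_{i\in N'}A_i\neq\emptyset$, either some $i\in N'$ has $|A_i\cap W|\ge\ell$ or $\bigcap_{i\in N'}A_i\subseteq W$. *)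

(* Defs.v *)
From HB Require Import structures.
From mathcomp Require Import all_boot all_order all_algebra.
From mathcomp Require Import reals.
Set Implicit Arguments. Unset Strict Implicit. Unset Printing Implicit Defensive.
Import Order.TTheory GRing.Theory Num.Theory.
Local Open Scope ring_scope.

Section Defs.
Variables (C : finType) (n : nat) (A : 'I_n -> {set C}) (k : nat).

Definition supporters (c : C) : {set 'I_n} := [set i | c \in A i].

Definition sw (W : {set C}) : nat := (\sum_(i < n) #|A i :&: W|)%N.

Definition opt_sw : nat := (\max_(W' : {set C} | #|W'| == k) sw W')%N.

Definition util_ratio (R : realType) (W : {set C}) : R :=
  (sw W)%:R / (opt_sw)%:R.

Definition AV_completion (W W' : {set C}) : Prop :=
  exists T : {set C},
    [/\ T \subset ~: W, #|T| = (k - #|W|)%N,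
        (forall T2 : {set C}, T2 \subset ~: W -> #|T2| = (k - #|W|)%N ->
           (\sum_(c in T2) #|supporters c| <= \sum_(c in T) #|supporters c|)%N)
      & W' = W :|: T].

Definition affordable (R : realType) (W : {set C}) : Prop :=
  exists p : 'I_n -> C -> R,
    [/\ forall i c, 0 <= p i c,
        forall i c, c \notin A i -> p i c = 0,
        forall i, \sum_(c : C) p i c <= k%:R / n%:R,
        forall c, c \in W -> \sum_(i < n) p i c = 1
      & forall c, c \notin W -> \sum_(i < n) p i c = 0].

Definition common (N' : {set 'I_n}) : {set C} := \bigcap_(i in N') A i.

Definition EJRplus (R : realType) (W : {set C}) : Prop :=
  forall (l : nat) (N' : {set 'I_n}),
    (1 <= l <= k)%N ->
    (#|N'|%:R : R) >= l%:R * n%:R / k%:R ->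
    common N' != set0 ->
    (exists2 i, i \in N' & (l <= #|A i :&: W|)%N) \/ common N' \subset W.

End Defs.

(* Main.v *)
Require Import Defs.
From HB Require Import structures.
From mathcomp Require Import all_boot all_order all_algebra.
From mathcomp Require Import reals.
From mathcomp Require Import zify ring lra.
Import Order.TTheory GRing.Theory Num.Theory.

Lemma sq_aux (k S y : nat) : 1 <= k -> y * y <= 8 * k * (S * S) ->
  (S + y) * (S + y) <= 16 * k * (S * S).
Proof.
move=> k1 hy.
have h2 : S + 2 * y <= 8 * k * S.
  rewrite leqNgt; apply/negP => hlt.
  have hh : (8 * k - 1) * S < 2 * y by lia.
  have hh2 : ((8 * k - 1) * S) * ((8 * k - 1) * S) < (2 * y) * (2 * y).
    exact: ltn_mul.
  have hk : 32 * k <= (8 * k - 1) * (8 * k - 1) by nia.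
  nia.
nia.
Qed.

Lemma sq_le {a b : nat} : a <= b -> a * a <= b * b.
Proof. by move=> h; apply: leq_mul. Qed.

Lemma core (k n S O h : nat) : 1 <= k -> 0 < n -> h <= n ->
  O <= S + k * h ->
  (k * h <= n -> k * h <= S) ->
  (n < k * h -> n <= S /\ forall l, 1 <= l <= k -> exists m, l * m <= S /\ k * h < l * n + k * m) ->
  O * O <= 16 * k * (S * S).
Proof.
move=> k1 n0 hn hO hA hB.
case: (leqP (k * h) n) => hkh.
  have h1 : O <= 2 * S by have := hA hkh; lia.
  have := sq_le h1; nia.
have [nS hl] := hB hkh.
set l := (k * h) %/ (2 * n).
have hl1 : l * (2 * n) <= k * h by rewrite leq_trunc_div.
have hl2 : k * h < (l + 1) * (2 * n).
  by rewrite /l addn1 ltn_ceil //; lia.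
case: (posnP l) => l0.
  rewrite l0 in hl2.
  have h1 : O <= 3 * S by lia.
  have := sq_le h1; nia.
have lk : 1 <= l <= k.
  apply/andP; split; first by lia.
  have : l * (2 * n) <= k * n by apply: (leq_trans hl1); rewrite leq_mul2l hn orbT.
  nia.
have [m [hm1 hm2]] := hl l lk.
have h2m : k * h < 2 * (k * m) by nia.
have hy : (k * h) * (k * h) <= 8 * k * (S * S).
  have e1 : l * h <= 2 * S.
    have : h <= 2 * m by nia.
    nia.
  have e2 : k * h <= 2 * S * (l + 1) by nia.
  have e3 : l * ((k * h) * (k * h)) <= 4 * k * (S * S) * (l + 1).
    have := leq_mul e1 (leq_mul (leqnn k) e2). nia.
  nia.
have := @sq_aux k S (k * h) k1 hy.
have : O * O <= (S + k * h) * (S + k * h) by apply: sq_le.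
lia.
Qed.

Lemma sw_supp (C : finType) (n : nat) (A : 'I_n -> {set C}) (X : {set C}) :
  sw A X = \sum_(c in X) #|supporters A c|.
Proof.
rewrite /sw.
have e1 : forall i, #|A i :&: X| = \sum_(c in X) (c \in A i : nat).
  move=> i; rewrite -sum1_card big_mkcond [RHS]big_mkcond /=.
  apply: eq_bigr => c _; rewrite inE.
  by case: (c \in A i); case: (c \in X).
transitivity (\sum_(i < n) \sum_(c in X) (c \in A i : nat))%N.
  by apply: eq_bigr => i _; exact: e1.
rewrite exchange_big /=.
apply: eq_bigr => c _.
rewrite /supporters -sum1_card [RHS]big_mkcond /= big_mkcond /=.
by apply: eq_bigr => i _; rewrite inE; case: (c \in A i).
Qed.

Lemma sum_sub_le (C : finType) (P Q : pred C) (F : C -> nat) :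
  (forall c, P c -> Q c) -> \sum_(c | P c) F c <= \sum_(c | Q c) F c.
Proof.
move=> hPQ; rewrite big_mkcond [X in _ <= X]big_mkcond /=.
apply: leq_sum => c _.
by case hP: (P c); [rewrite (hPQ c hP) | ].
Qed.

Local Open Scope ring_scope.

Theorem corollary2 (R : realType) (C : finType) (n : nat)
    (A : 'I_n -> {set C}) (k : nat) (W : {set C}) :
  (0 < n)%N -> (1 <= k <= #|C|)%N ->
  (#|W| <= k)%N ->
  (0 < opt_sw A k)%N ->
  affordable A k R W -> EJRplus A k R W ->
  forall W' : {set C}, AV_completion A k W W' ->
    util_ratio A k R W' >=
      1 / (4 * Num.sqrt (k%:R : R)) - 1 / (2 * k%:R).
Proof.
move=> n0 /andP[k1 kC] Wk O0 [p [p0 pA psum pW pnW]] ejr W' [T [HT HTc HTopt HW']].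
set S := sw A W'.
set O := opt_sw A k.
set F := fun c => #|supporters A c|.
set h := (\max_(c | c \notin W') F c)%N.
have WW' : {subset W <= W'} by move=> c cW; rewrite HW' inE cW.
have TW' : {subset T <= W'} by move=> c cT; rewrite HW' inE cT orbT.
have cardW' : #|W'| = k.
  have dis : W :&: T = set0.
    apply/setP => c; rewrite !inE; apply/negP => /andP[cW cT].
    by have := subsetP HT c cT; rewrite inE cW.
  by rewrite HW' cardsU dis cards0 subn0 HTc; lia.
have F1 : (O <= S + k * h)%N.
  apply/bigmax_leqP => X /eqP hX.
  rewrite sw_supp /S sw_supp (bigID (fun c => c \in W')) /=.
  apply: leq_add.
    by apply: sum_sub_le => c /andP[].
  apply: (leq_trans (n := \sum_(c in X) h)).
    apply: (leq_trans (n := \sum_(c in X | c \notin W') h)).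
      by apply: leq_sum => c /andP[_ cn]; apply: leq_bigmax_cond.
    by apply: sum_sub_le => c /andP[].
  by rewrite sum_nat_const hX.
have F2 : forall c, c \in W -> (n <= k * F c)%N.
  move=> c cW.
  have e : \sum_(i < n) p i c = \sum_(i in supporters A c) p i c.
    rewrite (bigID (mem (supporters A c))) /= [X in _ + X]big1 ?addr0 //.
    by move=> i hi; apply: pA; rewrite inE in hi.
  have hle : forall i, p i c <= k%:R / n%:R.
    move=> i; apply: le_trans (psum i).
    rewrite (bigD1 c) //= lerDl; exact: sumr_ge0.
  have h1 : (1 : R) <= (F c)%:R * (k%:R / n%:R).
    have hs : \sum_(i in supporters A c) p i c <= \sum_(i in supporters A c) (k%:R / n%:R : R).
      by apply: ler_sum => i _.
    by rewrite sumr_const -e pW // in hs; rewrite mulr_natl.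
  have h2 : (n%:R : R) <= (k * F c)%:R.
    rewrite mulrA in h1.
    rewrite ler_pdivlMr ?ltr0n // mul1r in h1.
    by rewrite natrM mulrC.
  by rewrite ler_nat in h2.
have F3 : forall t c, t \in T -> c \notin W' -> (F c <= F t)%N.
  move=> t c tT cW'.
  have cW : c \notin W by apply/negP => /WW' hc; rewrite hc in cW'.
  have cT : c \notin T by apply/negP => /TW' hc; rewrite hc in cW'.
  have cTt : c \notin T :\ t by rewrite inE negb_and cT orbT.
  have sub : c |: (T :\ t) \subset ~: W.
    apply/subsetP => x; rewrite !inE => /orP[/eqP -> | /andP[_ xT]].
      by [].
    by have := subsetP HT x xT; rewrite inE.
  have crd : #|c |: (T :\ t)| = (k - #|W|)%N.
    by rewrite cardsU1 cTt -HTc (cardsD1 t T) tT.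
  have H := HTopt _ sub crd.
  rewrite big_setU1 //= (big_setD1 t tT) /= in H.
  by rewrite /F; rewrite leq_add2r in H.
have hF : forall c, c \in T -> (h <= F c)%N.
  by move=> c cT; apply/bigmax_leqP => c' c'W; apply: F3.
have F4 : (k * minn (k * h) n <= k * S)%N.
  have H : (\sum_(c in W') minn (k * h) n <= \sum_(c in W') k * F c)%N.
    apply: leq_sum => c cW'.
    case cW: (c \in W).
      by have := F2 c cW; lia.
    have cT : c \in T by move: cW'; rewrite HW' inE cW.
    by have := hF c cT; nia.
  by rewrite sum_nat_const cardW' -big_distrr /= /F -sw_supp in H.
rewrite leq_pmul2l // in F4.
have hn : (h <= n)%N.
  apply/bigmax_leqP => c _; rewrite /F.
  by apply: leq_trans (max_card _) _; rewrite card_ord.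
have F5 : (n < k * h)%N -> forall l, (1 <= l <= k)%N ->
    exists m, (l * m <= S)%N /\ (k * h < l * n + k * m)%N.
  move=> hkh l /andP[l1 lk].
  have [c cW' hc] : exists2 c, c \notin W' & F c = h.
    case: (pickP [pred c | c \notin W']) => [c0 /= c0W | none].
      case: (@arg_maxnP C c0 [pred x | x \notin W'] F c0W) => c /= cW' cmax.
      exists c => //; apply/eqP; rewrite eqn_leq; apply/andP; split.
        exact: (leq_bigmax_cond (P := fun c => c \notin W')).
      by apply/bigmax_leqP => j hj; exact: cmax.
    have h0 : h = 0%N by rewrite /h big_pred0 // => x; exact: none x.
    by rewrite h0 muln0 in hkh.
  have cW : c \notin W by apply/negP => /WW' hc'; rewrite hc' in cW'.
  set B := [set i : 'I_n | (l <= #|A i :&: W|)%N].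
  set M := supporters A c :&: B.
  set N' := supporters A c :\: B.
  have hsplit := cardsID B (supporters A c).
  exists #|M|; split.
    have H1 : (\sum_(i in M) l <= \sum_(i in M) #|A i :&: W|)%N.
      by apply: leq_sum => i; rewrite !inE => /andP[_].
    have H2 : (\sum_(i in M) #|A i :&: W| <= \sum_(i < n) #|A i :&: W|)%N.
      by rewrite [X in (_ <= X)%N](bigID (mem M)) /=; apply: leq_addr.
    have H3 : (\sum_(i < n) #|A i :&: W| <= S)%N.
      apply: leq_sum => i _; apply: subset_leq_card; apply: setIS.
      by apply/subsetP; exact: WW'.
    rewrite sum_nat_const in H1; rewrite mulnC.
    exact: leq_trans H1 (leq_trans H2 H3).
  have hN : (k * #|N'| < l * n)%N.
    rewrite ltnNge; apply/negP => hge.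
    have hsz : (#|N'|%:R : R) >= l%:R * n%:R / k%:R.
      rewrite ler_pdivrMr ?ltr0n // -!natrM ler_nat. lia.
    have hcom : common A N' != set0.
      apply/set0Pn; exists c; rewrite /common; apply/bigcapP => i.
      by rewrite !inE => /andP[_].
    case: (ejr l N' (introT andP (conj l1 lk)) hsz hcom) => [[i iN' li] | sub].
      by move: iN'; rewrite !inE li.
    have cc : c \in common A N'.
      by rewrite /common; apply/bigcapP => i; rewrite !inE => /andP[_].
    by have := subsetP sub c cc; rewrite (negbTE cW).
  have e : F c = (#|M| + #|N'|)%N by rewrite /F hsplit.
  rewrite -hc e; lia.
have key : (O * O <= 16 * k * (S * S))%N.
  apply: (@core k n S O h k1 n0 hn F1).
    by move=> hkh; move: F4; rewrite (minn_idPl hkh).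
  move=> hkh; split; last exact: F5.
  by move: F4; rewrite (minn_idPr (ltnW hkh)).
rewrite /util_ratio -/S -/O.
have Opos : (0 < O%:R :> R) by rewrite ltr0n.
set q := Num.sqrt (k%:R : R).
have qpos : 0 < q by rewrite sqrtr_gt0 ltr0n.
have hq : q ^+ 2 = k%:R by rewrite sqr_sqrtr // ler0n.
have hO : (O%:R : R) <= 4 * q * S%:R.
  have e : (O%:R : R) ^+ 2 <= (4 * q * S%:R) ^+ 2.
    rewrite !exprMn hq.
    move: key; rewrite -(ler_nat R) !natrM => key.
    apply: (le_trans (y := 16%:R * k%:R * (S%:R * S%:R))).
      by rewrite expr2.
    by rewrite le_eqVlt; apply/orP; left; apply/eqP; ring.
  rewrite ler_sqr ?nnegrE ?ler0n // in e.
  by apply: mulr_ge0; [apply: mulr_ge0 => //; apply: ltW | rewrite ler0n].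
have h1 : 1 / (4 * q) <= S%:R / O%:R.
  rewrite ler_pdivlMr // mul1r mulrC ler_pdivrMr ?mulr_gt0 //.
  by rewrite mulrC.
apply: le_trans h1.
rewrite gerBl divr_ge0 // mulr_ge0 // ler0n.
Qed.
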